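(* Let $q=4$, $k\ge1$, $S_{2k}=x+x^q+\cdots+x^{q^{2k-1}}\in\mathbb{F}_2[x]$, and $g(x)=x+S_{2k}(x)^{q^{2k}}+S_{2k}(x)^{q^k+3}$. Let $c\in\mathbb{F}_{q^{3k}}$ and $a=c+c^{q^k}$. Then for every $x\in\mathbb{F}_{q^{3k}}$, \[ \mathrm{Tr}\bigl(a\,g(x)\bigr)=\mathrm{Tr}\bigl(c\,S_{2k}(x)^{1+2q^k+q^{2k}}\bigr), \] where $\mathrm{Tr}=\mathrm{Tr}_{q^{3k}/2}$ is the absolute trace of $\mathbb{F}_{q^{3k}}$ to $\mathbb{F}_2$.
   Context: $\mathbb{F}_m$ denotes the finite field with $m$ elements. $\mathrm{Tr}_{q^{3k}/2}(z)=\sum_{i=0}^{6k-1}z^{2^i}$ for $z\in\mathbb{F}_{4^{3k}}$. *)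

(* Defs.v *)
From HB Require Import structures.
From mathcomp Require Import all_boot all_order all_algebra all_field.
Set Implicit Arguments. Unset Strict Implicit. Unset Printing Implicit Defensive.
Import GRing.Theory.
Local Open Scope ring_scope.

Definition S2k (F : finFieldType) (k : nat) (x : F) : F :=
  \sum_(i < 2 * k) x ^+ (4 ^ i)%N.

Definition gpoly (F : finFieldType) (k : nat) (x : F) : F :=
  x + S2k k x ^+ (4 ^ (2 * k))%N + S2k k x ^+ (4 ^ k + 3)%N.

Definition Tr (F : finFieldType) (k : nat) (z : F) : F :=
  \sum_(i < 6 * k) z ^+ (2 ^ i)%N.

(* Main.v *)
Require Import Defs.
From HB Require Import structures.
From mathcomp Require Import all_boot all_order all_algebra all_field.
From mathcomp Require Import zify ring.
Import GRing.Theory.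
Local Open Scope ring_scope.

Lemma addxx (F : finFieldType) (h2 : (2%:R : F) = 0) (y : F) : y + y = 0.
Proof. by rewrite -mulr2n -mulr_natr h2 mulr0. Qed.

Lemma frobD2 (F : finFieldType) (h2 : (2%:R : F) = 0) n (y z : F) :
  (y + z) ^+ (2 ^ n)%N = y ^+ (2 ^ n)%N + z ^+ (2 ^ n)%N.
Proof.
elim: n => [|n IH]; first by rewrite !expr1.
rewrite expnSr !exprM IH sqrrD.
have -> : y ^+ (2 ^ n)%N * z ^+ (2 ^ n)%N *+ 2 = 0.
  by rewrite -mulr_natr h2 mulr0.
by rewrite addr0.
Qed.

Lemma frobD4 (F : finFieldType) (h2 : (2%:R : F) = 0) n (y z : F) :
  (y + z) ^+ (4 ^ n)%N = y ^+ (4 ^ n)%N + z ^+ (4 ^ n)%N.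
Proof. by rewrite -[4%N]/(2 ^ 2)%N -expnM frobD2. Qed.

Lemma frobS4 (F : finFieldType) (h2 : (2%:R : F) = 0) n m (f : nat -> F) :
  (\sum_(i < m) f i) ^+ (4 ^ n)%N = \sum_(i < m) (f i) ^+ (4 ^ n)%N.
Proof.
elim: m => [|m IH]; first by rewrite !big_ord0 expr0n expn_eq0.
by rewrite !big_ord_recr /= frobD4 // IH.
Qed.

Lemma TrD (F : finFieldType) (h2 : (2%:R : F) = 0) k (y z : F) :
  Tr k (y + z) = Tr k y + Tr k z.
Proof. rewrite /Tr -big_split /=; apply: eq_bigr => i _; exact: frobD2. Qed.

Lemma Tr_sq (F : finFieldType) k (hk : (1 <= k)%N) (hF : #|F| = (4 ^ (3 * k))%N)
  (z : F) : Tr k (z ^+ 2) = Tr k z.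
Proof.
rewrite /Tr.
have e : (6 * k = (6 * k).-1.+1)%N by rewrite prednK // muln_gt0.
rewrite e big_ord_recr big_ord_recl /= addrC; congr (_ + _).
  rewrite -exprM -expnS -e.
  have -> : (2 ^ (6 * k) = #|F|)%N by rewrite hF -[4%N]/(2 ^ 2)%N -expnM mulnA.
  by rewrite expf_card expr1.
apply: eq_bigr => i _; by rewrite -exprM -expnS.
Qed.

Lemma Tr_pow2 (F : finFieldType) k (hk : (1 <= k)%N) (hF : #|F| = (4 ^ (3 * k))%N)
  (z : F) n : Tr k (z ^+ (2 ^ n)%N) = Tr k z.
Proof.
elim: n => [|n IH]; first by rewrite expr1.
by rewrite expnSr exprM Tr_sq.
Qed.

Lemma Tr_pow4 (F : finFieldType) k (hk : (1 <= k)%N) (hF : #|F| = (4 ^ (3 * k))%N)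
  (z : F) n : Tr k (z ^+ (4 ^ n)%N) = Tr k z.
Proof. by rewrite -[4%N]/(2 ^ 2)%N -expnM Tr_pow2. Qed.

Lemma S_split (F : finFieldType) (h2 : (2%:R : F) = 0) k (x : F) :
  S2k k x = \sum_(i < k) x ^+ (4 ^ i)%N + (\sum_(i < k) x ^+ (4 ^ i)%N) ^+ (4 ^ k)%N.
Proof.
rewrite /S2k mul2n -addnn big_split_ord /= (frobS4 _ h2 k k (fun i => x ^+ (4 ^ i)%N)); congr (_ + _).
apply: eq_bigr => i _; by rewrite -exprM -expnD addnC.
Qed.

Lemma S_tele (F : finFieldType) (h2 : (2%:R : F) = 0) k (hk : (1 <= k)%N) (x : F) :
  S2k k x ^+ (4 ^ 1)%N + S2k k x = x + x ^+ (4 ^ (2 * k))%N.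
Proof.
rewrite /S2k (frobS4 _ h2 1 (2 * k) (fun i => x ^+ (4 ^ i)%N)).
have e : (2 * k = (2 * k).-1.+1)%N by rewrite prednK // muln_gt0.
rewrite e big_ord_recr big_ord_recl /= -e expr1.
set A := \sum_(i < _) _; set B := \sum_(i < _) _.
have -> : B = A.
  by apply: eq_bigr => i _; rewrite -exprM -expnD addn1.
rewrite -exprM -expnD addn1 -e.
by rewrite [x + A]addrC addrACA addxx // add0r addrC.
Qed.

Lemma Smain (F : finFieldType) (h2 : (2%:R : F) = 0) k
  (hF : #|F| = (4 ^ (3 * k))%N) (x : F) :
  S2k k x ^+ (4 ^ (2 * k))%N = S2k k x + S2k k x ^+ (4 ^ k)%N.
Proof.
have hN : forall z : F, z ^+ (4 ^ (3 * k))%N = z by move=> z; rewrite -hF expf_card.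
have eQQ : (4 ^ k * 4 ^ k = 4 ^ (2 * k))%N by rewrite -expnD addnn mul2n.
have eQQ2 : (4 ^ k * 4 ^ (2 * k) = 4 ^ (3 * k))%N by rewrite -expnD -mulSn.
rewrite S_split // !frobD4 // -!exprM eQQ eQQ2 hN.
set u := \sum_(i < k) _.
by rewrite -[RHS]addrA [X in _ = _ + X]addrA addxx // add0r addrC.
Qed.

Theorem mainTheorem5 (k : nat) (hk : (1 <= k)%N)
  (F : finFieldType) (hF : #|F| = (4 ^ (3 * k))%N) (c : F) :
  let a := c + c ^+ (4 ^ k)%N in
  forall x : F,
    Tr k (a * gpoly k x) = Tr k (c * S2k k x ^+ (1 + 2 * 4 ^ k + 4 ^ (2 * k))%N).
Proof.
move=> a x.
have h2 : (2%:R : F) = 0.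
  apply: pcharf0; apply: (card_finPcharP (n := (6 * k)%N)) => //.
  by rewrite hF -[4%N]/(2 ^ 2)%N -expnM mulnA.
have hN : forall z : F, z ^+ (4 ^ (3 * k))%N = z by move=> z; rewrite -hF expf_card.
have eQQ : (4 ^ k * 4 ^ k = 4 ^ (2 * k))%N by rewrite -expnD; congr expn; lia.
have eQQ2 : (4 ^ k * 4 ^ (2 * k) = 4 ^ (3 * k))%N by rewrite -expnD; congr expn; lia.
have eQ2Q2 : (4 ^ (2 * k) * 4 ^ (2 * k) = 4 ^ (3 * k) * 4 ^ k)%N.
  by rewrite -!expnD; congr expn; lia.
have hS2 := Smain _ h2 k hF x.
have hT := S_tele _ h2 k hk x.
rewrite /gpoly /a.
set S := S2k k x in hS2 hT *.
rewrite exprD mulrDl TrD //.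
rewrite -[X in _ + X](Tr_pow4 _ k hk hF _ (2 * k)) exprMn -exprM eQQ2 hN.
rewrite !frobD4 // exprMn -!exprM eQ2Q2 eQQ2 (exprM S (4 ^ (3 * k))%N) (mulnC 3 (4 ^ (2 * k))%N) (exprM S _ 3) !hN.
rewrite -TrD //; congr (Tr k _).
rewrite !exprD expr0 expr1 mulr1 hS2.
have hx : x ^+ (4 ^ (2 * k))%N = S ^+ 4 + S + x.
  by move: hT; rewrite expn1 => ->; rewrite addrAC addxx // add0r.
rewrite hx.
set s1 := S ^+ (4 ^ k)%N.
rewrite -[RHS]addr0 -[X in _ = _ + X](mul0r (c * (x + S + s1 + S ^+ 4 + 2%:R * S ^+ 3 * s1 + S ^+ 2 * s1 ^+ 2))) -h2.
ring.
Qed.
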